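(* Let $N\ge4$ be even. Then: (i) for every $k$ with $1\le k\le N/2-1$, $\mathrm{scale}_N[k]\cdot\mathrm{scale}_N[N/2-k]=\mathrm{GenScale}[N]$ (i.e. the list of scales equals the reversed list of $\mathrm{GenScale}[N]$ divided by the scales), and the $\mathbb{Q}$-span of the scales $\{\mathrm{scale}_N[k]:1\le k\le N/2-1\}$ has dimension at most $N/4$; (ii) if $N\equiv 2\pmod 4$, the dimension of that $\mathbb{Q}$-span is at most $\lfloor N/4\rfloor$, and the even-indexed and odd-indexed scales determine each other via $\mathrm{scale}_N[2m]=\mathrm{GenScale}[N]/\mathrm{scale}_N[N/2-2m]$ (with $N/2-2m$ odd); (iii) if $4\mid N$, then $\mathrm{scale}_N[N/4]=\sqrt{\mathrm{GenScale}[N]}$, and the scales with indices $k>N/4$ are obtained from those with $k<N/4$ as $\mathrm{GenScale}[N]/\mathrm{scale}_N[k]$; (iv) if $N\ge6$, then $\mathrm{ScaleSwap}[N,N/2]=\mathrm{scale}_N[2]$ and for every $k$ with $1\le k<N/4$, $\mathrm{scale}_{N/2}[k]=\mathrm{scale}_N[2k]/\mathrm{ScaleSwap}[N,N/2]$.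
   Context: For an integer $n\ge3$ and $1\le k<n/2$, $\mathrm{scale}_n[k]=\tan(\pi/n)/\tan(k\pi/n)$. $\langle n/2\rangle$ is the greatest integer strictly less than $n/2$ and $\mathrm{GenScale}[n]=\mathrm{scale}_n[\langle n/2\rangle]$ (so for $n$ even, $\mathrm{GenScale}[n]=\mathrm{scale}_n[n/2-1]$). $\mathrm{ScaleSwap}[n,m]=\tan(\pi/n)/\tan(\pi/m)$. *)

(* Defs.v *)
From HB Require Import structures.
From mathcomp Require Import all_boot all_order all_algebra.
From mathcomp Require Import all_classical all_reals.
From mathcomp Require Import trigo.
Set Implicit Arguments. Unset Strict Implicit. Unset Printing Implicit Defensive.
Import Order.TTheory GRing.Theory Num.Theory.
Local Open Scope ring_scope.

Definition scale {R : realType} (n k : nat) : R :=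
  tan (pi / n%:R) / tan (k%:R * pi / n%:R).

(* <n/2> = greatest integer strictly less than n/2 = (n-1) div 2 *)
Definition half_lt (n : nat) : nat := (n.-1)./2.

Definition GenScale {R : realType} (n : nat) : R := scale n (half_lt n).

Definition ScaleSwap {R : realType} (n m : nat) : R :=
  tan (pi / n%:R) / tan (pi / m%:R).

Definition scales {R : realType} (N : nat) : seq R :=
  [seq scale N k | k <- iota 1 (N./2 - 1)].

(* "The Q-span of the reals in s has dimension at most d":
   there are d reals spanning (over Q) every element of s. *)
Definition Qspan_dim_le {R : realType} (s : seq R) (d : nat) : Prop :=
  exists b : 'I_d -> R,
    forall x, x \in s -> exists c : 'I_d -> rat, x = \sum_(i < d) ratr (c i) * b i.

(* Main.v *)
Require Import Defs.
From HB Require Import structures.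
From mathcomp Require Import all_boot all_order all_algebra.
From mathcomp Require Import all_classical all_reals.
From mathcomp Require Import trigo.
From mathcomp Require Import ring lra zify.
Import Order.TTheory GRing.Theory Num.Theory.
Local Open Scope ring_scope.

Lemma cos_pihB {R : realType} (y : R) : cos (pi / 2 - y) = sin y.
Proof. by rewrite cosB cos_pihalf sin_pihalf mul0r mul1r add0r. Qed.
Lemma sin_pihB {R : realType} (y : R) : sin (pi / 2 - y) = cos y.
Proof. by rewrite sinB cos_pihalf sin_pihalf mul0r mul1r subr0. Qed.

Lemma argB {R : realType} (n k : nat) : (k <= n)%N -> (0 < n)%N ->
  (n - k)%:R * pi / (n.*2)%:R = pi / 2 - k%:R * pi / (n.*2)%:R :> R.
Proof.
move=> kn n0; rewrite natrB // -mul2n natrM.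
have : n%:R != 0 :> R by rewrite pnatr_eq0 -lt0n.
move=> h; field.
exact: h.
Qed.

Lemma arg_pos {R : realType} (n k : nat) : (0 < k)%N -> (k < n)%N ->
  0 < (k%:R * pi / (n.*2)%:R : R) < pi / 2.
Proof.
move=> k0 kn; have n0 : (0 < n)%N by apply: leq_ltn_trans kn.
have hn : 0 < n%:R :> R by rewrite ltr0n.
have hk : 0 < k%:R :> R by rewrite ltr0n.
have hkn : k%:R < n%:R :> R by rewrite ltr_nat.
have hp := @pi_gt0 R.
rewrite -mul2n natrM; apply/andP; split.
  by apply: divr_gt0; [apply: mulr_gt0|apply: mulr_gt0].
have -> : k%:R * pi / (2%:R * n%:R) = (k%:R / n%:R) * (pi / 2) :> R.
  by field; rewrite gt_eqF.
rewrite -[X in _ < X]mul1r ltr_pM2r ?divr_gt0 //.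
by rewrite ltr_pdivrMr // mul1r.
Qed.

Definition th {R : realType} (n k : nat) : R := k%:R * pi / (n.*2)%:R.

Lemma sin_th_gt0 {R : realType} n k : (0 < k)%N -> (k < n)%N -> 0 < sin (th n k : R).
Proof.
move=> k0 kn; apply: sin_gt0_pihalf; exact: arg_pos.
Qed.

Lemma cos_th_gt0 {R : realType} n k : (0 < k)%N -> (k < n)%N -> 0 < cos (th n k : R).
Proof.
move=> k0 kn; apply: cos_gt0_pihalf; have /andP[h1 h2] := @arg_pos R n k k0 kn.
apply/andP; split=> //; apply: lt_trans h1; rewrite oppr_lt0 divr_gt0 ?pi_gt0 //.
Qed.

Lemma tan_thB {R : realType} n k : (k <= n)%N -> (0 < n)%N ->
  tan (th n (n - k) : R) = cos (th n k) / sin (th n k).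
Proof.
move=> kn n0; rewrite /th argB // /tan sin_pihB cos_pihB //.
Qed.

Lemma scaleE {R : realType} n k : scale (n.*2) k = tan (th n 1) / tan (th n k) :> R.
Proof. by rewrite /scale /th mul1r. Qed.

Lemma half_lt_double n : (0 < n)%N -> half_lt n.*2 = (n - 1)%N.
Proof.
by case: n => // m _; rewrite /half_lt doubleS /= uphalf_double subn1.
Qed.

Lemma GenScaleE {R : realType} n : (1 < n)%N ->
  GenScale (n.*2) = tan (th n 1) ^+ 2 :> R.
Proof.
move=> n1; rewrite /GenScale half_lt_double ?(ltn_trans _ n1) // scaleE.
rewrite tan_thB ?(ltn_trans _ n1) //.
have hs := @sin_th_gt0 R n 1 isT n1; have hc := @cos_th_gt0 R n 1 isT n1.
rewrite /tan; field.
by rewrite !gt_eqF.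
Qed.

Lemma scale_prod {R : realType} n k : (0 < k)%N -> (k < n)%N ->
  scale (n.*2) k * scale (n.*2) (n - k) = GenScale (n.*2) :> R.
Proof.
move=> k0 kn; have n1 : (1 < n)%N by apply: leq_ltn_trans kn.
rewrite GenScaleE // !scaleE tan_thB ?(ltnW kn) ?(ltn_trans _ n1) //.
have hs := @sin_th_gt0 R n k k0 kn; have hc := @cos_th_gt0 R n k k0 kn.
rewrite /tan; field.
have := @cos_th_gt0 R n 1 isT n1; move=> h1; by rewrite !gt_eqF.
Qed.

Lemma scale_gt0 {R : realType} n k : (0 < k)%N -> (k < n)%N ->
  0 < scale (n.*2) k :> R.
Proof.
move=> k0 kn; have n1 : (1 < n)%N by apply: leq_ltn_trans kn.
rewrite scaleE /tan.
have := @sin_th_gt0 R n k k0 kn; have := @cos_th_gt0 R n k k0 kn.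
have := @sin_th_gt0 R n 1 isT n1; have := @cos_th_gt0 R n 1 isT n1.
move=> *; by rewrite !(divr_gt0, invr_gt0, mulr_gt0).
Qed.
Lemma rev_iota_map m : rev (map (fun k => (m.+1 - k)%N) (iota 1 m)) = iota 1 m.
Proof.
apply: (@eq_from_nth _ 0); first by rewrite size_rev size_map !size_iota.
move=> i; rewrite size_rev size_map size_iota => im.
rewrite nth_rev ?size_map ?size_iota // (nth_map 0) ?size_iota; last lia.
rewrite !nth_iota //; lia.
Qed.



Lemma sin_jsum {R : realType} (u : R) (m : nat) :
  2 * (1 - cos u) * (\sum_(j < m) j%:R * sin (j%:R * u)) =
  m%:R * sin ((m%:R - 1) * u) - (m%:R - 1) * sin (m%:R * u).
Proof.
elim: m => [|m IH]; first by rewrite big_ord0 !mul0r mulr0 sin0 mulr0 subr0.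
rewrite big_ord_recr /= mulrDr IH -[m.+1%:R]natr1.
have e1 : (m%:R + 1 - 1) * u = m%:R * u :> R by rewrite addrK.
have e2 : (m%:R + 1) * u = m%:R * u + u :> R by rewrite mulrDl mul1r.
have e3 : (m%:R - 1) * u = m%:R * u - u :> R by rewrite mulrBl mul1r.
rewrite e1 e2 e3 !sinD sinN cosN; ring.
Qed.

Lemma cos_altsum {R : realType} (v : R) (h : nat) :
  2 * cos v * (\sum_(m < h.+1) (-1) ^+ m * cos (m%:R * (2 * v))) =
  cos v + (-1) ^+ h * cos ((2 * h%:R + 1) * v).
Proof.
elim: h => [|h IH].
  by rewrite big_ord_recr big_ord0 /= !mul0r cos0 add0r expr0 !mul1r mulr1 mulr0 add0r mul1r; ring.
rewrite big_ord_recr /= mulrDr IH.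
set A := (2 * h%:R + 1) * v.
have e1 : h.+1%:R * (2 * v) = A + v by rewrite /A -natr1; ring.
have e2 : (2 * h.+1%:R + 1) * v = (A + v) + v by rewrite /A -natr1; ring.
rewrite e1 e2 !cosD sinD exprS.
have := cos2Dsin2 v; move=> P.
rewrite [in X in X + _ = _](_ : cos A = cos A * (cos v ^+ 2 + sin v ^+ 2)); last by rewrite P mulr1.
ring.
Qed.


Definition inV {R : realType} {d : nat} (b : 'I_d -> R) (y : R) :=
  exists c : 'I_d -> rat, y = \sum_(i < d) ratr (c i) * b i.

Lemma inV0 {R : realType} {d} (b : 'I_d -> R) : inV b 0.
Proof. by exists (fun _ => 0); rewrite big1 // => i _; rewrite rmorph0 mul0r. Qed.

Lemma inVD {R : realType} {d} (b : 'I_d -> R) y z : inV b y -> inV b z -> inV b (y + z).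
Proof.
move=> [c1 ->] [c2 ->]; exists (fun i => c1 i + c2 i).
by rewrite -big_split /=; apply: eq_bigr => i _; rewrite rmorphD mulrDl.
Qed.

Lemma inVZ {R : realType} {d} (b : 'I_d -> R) q y : inV b y -> inV b (ratr q * y).
Proof.
move=> [c ->]; exists (fun i => q * c i).
by rewrite mulr_sumr; apply: eq_bigr => i _; rewrite rmorphM mulrA.
Qed.

Lemma inVN {R : realType} {d} (b : 'I_d -> R) y : inV b y -> inV b (- y).
Proof. by move=> h; rewrite -mulN1r -(rmorphN1 (ratr : rat -> R)); apply: inVZ. Qed.

Lemma inV_sum {R : realType} {d} (b : 'I_d -> R) m (F : 'I_m -> R) :
  (forall j, inV b (F j)) -> inV b (\sum_(j < m) F j).
Proof.
move=> hF; elim: m F hF => [|m IH] F hF; first by rewrite big_ord0; apply: inV0.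
rewrite big_ord_recr /=; apply: inVD; last exact: hF.
exact: (IH (fun j => F (widen_ord (leqnSn m) j))).
Qed.

Lemma inV_b {R : realType} {d} (b : 'I_d -> R) i : inV b (b i).
Proof.
exists (fun j => if j == i then 1 else 0).
rewrite (bigD1 i) //= eqxx rmorph1 mul1r big1 ?addr0 // => j /negbTE ->.
by rewrite rmorph0 mul0r.
Qed.

Definition Cn {R : realType} (n r : nat) : R := cos (r%:R * pi / n%:R).
Definition Sn {R : realType} (n r : nat) : R := sin (r%:R * pi / n%:R).

Lemma Cn_2n {R : realType} n r : (0 < n)%N -> Cn n (r + n.*2) = Cn n r :> R.
Proof.
move=> n0; have hn : n%:R != 0 :> R by rewrite pnatr_eq0 -lt0n.
rewrite /Cn (_ : _ * pi / _ = r%:R * pi / n%:R + pi *+ 2) ?cosD2pi //.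
by rewrite natrD -mul2n natrM mulr2n; field.
Qed.

Lemma Cn_mod {R : realType} n r : (0 < n)%N -> Cn n r = Cn n (r %% n.*2)%N :> R.
Proof.
move=> n0; rewrite {1}(divn_eq r (n.*2)); elim: (r %/ n.*2)%N => [|q IH].
  by rewrite mul0n add0n.
by rewrite mulSn -addnA addnC Cn_2n // addnC.
Qed.

Lemma Cn_sym {R : realType} n r : (0 < n)%N -> (r <= n.*2)%N ->
  Cn n (n.*2 - r) = Cn n r :> R.
Proof.
move=> n0 rn; have hn : n%:R != 0 :> R by rewrite pnatr_eq0 -lt0n.
rewrite /Cn (_ : _ * pi / _ = - (r%:R * pi / n%:R) + pi *+ 2) ?cosD2pi ?cosN //.
by rewrite natrB // -mul2n natrM mulr2n; field.
Qed.

Lemma Cn_neg {R : realType} n r : (0 < n)%N -> (r <= n)%N ->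
  Cn n (n - r) = - Cn n r :> R.
Proof.
move=> n0 rn; have hn : n%:R != 0 :> R by rewrite pnatr_eq0 -lt0n.
rewrite /Cn (_ : _ * pi / _ = - (r%:R * pi / n%:R) + pi) ?cosDpi ?cosN //.
by rewrite natrB //; field.
Qed.

Lemma Cn_half {R : realType} n : (0 < n)%N -> ~~ odd n -> Cn n n./2 = 0 :> R.
Proof.
move=> n0 ev; have hn : n%:R != 0 :> R by rewrite pnatr_eq0 -lt0n.
have e : n = n./2.*2 by rewrite -[LHS]odd_double_half (negbTE ev).
have hn2 : n./2%:R != 0 :> R by rewrite pnatr_eq0; lia.
rewrite /Cn {2}e -mul2n natrM (_ : _ * pi / _ = pi / 2) ?cos_pihalf //.
by field.
Qed.

Lemma Cn0 {R : realType} n : Cn n 0 = 1 :> R.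
Proof. by rewrite /Cn !mul0r cos0. Qed.

Definition bn {R : realType} (n : nat) : 'I_(n./2) -> R := fun i => Cn n (i + odd n).

Lemma inV_small {R : realType} n m : (1 < n)%N -> (m <= n./2)%N ->
  (0 < m)%N || ~~ odd n -> inV (bn n : 'I_(n./2) -> R) (Cn n m).
Proof.
move=> n1 mh; case on: (odd n) => /= hm.
  have im : (m - 1 < n./2)%N by lia.
  have := inV_b (bn n : 'I_(n./2) -> R) (Ordinal im).
  by rewrite /bn /= on addn1 subn1 prednK //; lia.
case: (ltnP m n./2) => hm2.
  have := inV_b (bn n : 'I_(n./2) -> R) (Ordinal hm2).
  by rewrite /bn /= on addn0.
have -> : m = n./2 by lia.
rewrite Cn_half ?on //; last lia.
exact: inV0.
Qed.

Lemma inV_one {R : realType} n : (1 < n)%N -> inV (bn n : 'I_(n./2) -> R) 1.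
Proof.
move=> n1; case on: (odd n).
  have hv := @cos_th_gt0 R n 1 isT n1.
  have := cos_altsum (pi / (n.*2)%:R : R) n./2.
  have -> : (2 * n./2%:R + 1) * (pi / (n.*2)%:R) = pi / 2 :> R.
    have e : n = (n./2).*2.+1 by rewrite -[LHS]odd_double_half on.
    have en : n%:R = 2 * (n./2)%:R + 1 :> R by rewrite {1}e -natr1 -mul2n natrM.
    rewrite -mul2n natrM en; field.
    by rewrite -en pnatr_eq0; lia.
  rewrite cos_pihalf mulr0 addr0 big_ord_recl /= expr0 mul1r mul0r cos0.
  move=> H.
  have hcv : cos (pi / (n.*2)%:R) != 0 :> R by move: hv; rewrite /th mul1r => /lt0r_neq0.
  set T := \sum_(i < n./2) _ in H.
  have -> : 1 = ratr (- 2%:Q) * T :> R.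
    rewrite rmorphN rmorphMn rmorph1.
    apply: (mulfI hcv); rewrite mulr1.
    have : 2 * cos (pi / (n.*2)%:R) * T = - cos (pi / (n.*2)%:R) :> R.
      by rewrite mulrDr mulr1 in H; apply: (addrI (2 * cos (pi / (n.*2)%:R))); rewrite H; ring.
    move=> H2; set c := cos _ in H2 *.
    rewrite (_ : c * _ = - (2 * c * T)); first by rewrite H2 opprK.
    rewrite -mulNrn; ring.
  apply: inVZ; apply: inV_sum => j.
  rewrite (_ : (-1) ^+ bump 0 j = ratr ((-1) ^+ bump 0 j) :> R); last by rewrite rmorphXn rmorphN1.
  apply: inVZ.
  have -> : (bump 0 j)%:R * (2 * (pi / (n.*2)%:R)) = (j.+1)%:R * pi / n%:R :> R.
    have hn : n%:R != 0 :> R by rewrite pnatr_eq0; lia.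
    rewrite /bump /= add1n -mul2n natrM; field.
    by rewrite hn.
  apply: (@inV_small R n j.+1 n1); first by have := ltn_ord j.
  by rewrite orTb.
have := @inV_small R n 0 n1 (leq0n _); rewrite on Cn0; apply.
by [].
Qed.

Lemma inV_small' {R : realType} n m : (1 < n)%N -> (m <= n./2)%N ->
  inV (bn n : 'I_(n./2) -> R) (Cn n m).
Proof.
move=> n1 mh; case: m mh => [|m] mh; first by rewrite Cn0; exact: inV_one.
by apply: inV_small.
Qed.

Lemma inV_all {R : realType} n r : (1 < n)%N -> inV (bn n : 'I_(n./2) -> R) (Cn n r).
Proof.
move=> n1; have n0 : (0 < n)%N by lia.
have mid s : (s <= n)%N -> inV (bn n : 'I_(n./2) -> R) (Cn n s).
  move=> sn; case: (leqP s n./2) => hs; first exact: inV_small'.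
  have -> : s = (n - (n - s))%N by lia.
  rewrite Cn_neg //; last lia.
  apply: inVN; apply: inV_small' => //; lia.
rewrite Cn_mod //; set r' := (r %% n.*2)%N.
have hr : (r' < n.*2)%N by rewrite /r' ltn_mod; lia.
case: (leqP r' n) => h; first exact: mid.
rewrite -Cn_sym //; last lia.
apply: mid; lia.
Qed.

Lemma inV_SS {R : realType} n p q : (1 < n)%N ->
  inV (bn n : 'I_(n./2) -> R) (Sn n p * Sn n q).
Proof.
move=> n1; have hn : n%:R != 0 :> R by rewrite pnatr_eq0; lia.
set P : R := p%:R * pi / n%:R; set Q : R := q%:R * pi / n%:R.
have eS : Cn n (p + q) = cos (P + Q) :> R by rewrite /Cn /P /Q natrD; congr cos; field.
have eD : Cn n (if (p <= q)%N then q - p else p - q)%N = cos (P - Q) :> R.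
  case: leqP => h; rewrite /Cn natrB ?(ltnW h) //.
    by rewrite -cosN; congr cos; rewrite /P /Q; field.
  by congr cos; rewrite /P /Q; field.
have -> : Sn n p * Sn n q = ratr (2^-1) * (Cn n (if (p <= q)%N then q - p else p - q)%N + - Cn n (p + q)) :> R.
  rewrite eS eD fmorphV rmorph_nat !cosD cosN sinN /Sn -/P -/Q; field.
  by [].
apply: inVZ; apply: inVD; last apply: inVN; exact: inV_all.
Qed.

Lemma cot_formula {R : realType} n a : (0 < a)%N -> (a < n)%N ->
  cos (th n a) / sin (th n a) =
  \sum_(j < n.*2) ratr (- (j%:R / n%:R : rat)) * Sn n (j * a) :> R.
Proof.
move=> a0 an; have n1 : (1 < n)%N by lia.
have hn : n%:R != 0 :> R by rewrite pnatr_eq0; lia.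
have hs := @sin_th_gt0 R n a a0 an.
set t := th n a.
set u : R := a%:R * pi / n%:R.
have ut : u = t *+ 2 by rewrite /u /t /th -mul2n natrM mulr2n; field.
have H := sin_jsum u (n.*2).
have e1 : (n.*2)%:R * u = 0 + (pi *+ 2) *+ a :> R.
  by rewrite /u -mul2n natrM -mulr_natl mulr2n add0r; field.
have e2 : ((n.*2)%:R - 1) * u = - u + (pi *+ 2) *+ a :> R.
  by rewrite mulrBl mul1r e1 add0r addrC.
rewrite e1 e2 !(periodicn (@sinD2pi R)) sin0 mulr0 subr0 sinN in H.
have eqS : \sum_(j < n.*2) ratr (- (j%:R / n%:R : rat)) * Sn n (j * a) =
    - n%:R^-1 * \sum_(j < n.*2) j%:R * sin (j%:R * u) :> R.
  rewrite mulr_sumr; apply: eq_bigr => j _.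
  rewrite rmorphN rmorphM fmorphV !rmorph_nat /Sn natrM /u [in RHS]mulrA [in RHS]mulrA; field; exact: hn.
rewrite eqS.
move: H; rewrite ut cos_mulr2n sin_mulr2n => H.
have P := cos2Dsin2 t.
set s := sin t in H P hs *; set c := cos t in H P *.
set Σ := \sum_(j < n.*2) _ in H *.
have hs0 : s != 0 by apply: lt0r_neq0.
have Pc : c ^+ 2 = 1 - s ^+ 2 by rewrite -P; ring.
rewrite Pc -mul2n natrM in H.
have h4 : 4 * s ^+ 2 != 0.
  by apply: mulf_neq0; [rewrite pnatr_eq0|rewrite expf_neq0].
have HS : 4 * s ^+ 2 * Σ = - (4 * n%:R * c * s).
  rewrite (_ : 4 * s ^+ 2 * Σ = 2 * (1 - ((1 - s ^+ 2) *+ 2 - 1)) * Σ); last ring.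
  rewrite H; ring.
have -> : Σ = - (n%:R * c / s).
  apply: (mulfI h4); rewrite HS; field; exact: hs0.
field; by rewrite hs0 hn.
Qed.

Lemma span_scales' {R : realType} n : (1 < n)%N ->
  Qspan_dim_le (scales (n.*2) : seq R) (n./2).
Proof.
move=> n1; exists (bn n) => x /mapP [k]; rewrite mem_iota doubleK => hk ->.
have k0 : (0 < k)%N by lia.
have kn : (k < n)%N by lia.
rewrite scaleE.
have e1 : tan (th n 1) = cos (th n (n - 1)) / sin (th n (n - 1)) :> R.
  by rewrite -tan_thB ?subKn //; lia.
rewrite e1 /tan invf_div.
rewrite !cot_formula //; last lia.
rewrite mulr_suml; apply: inV_sum => j; rewrite mulr_sumr; apply: inV_sum => l.
rewrite mulrACA -rmorphM; apply: inVZ; exact: inV_SS.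
lia.
Qed.

Theorem lemma5 (R : realType) (N : nat) (HN4 : (4 <= N)%N) (Hev : ~~ odd N) :
  (* (i) *)
  ((forall k : nat, (1 <= k <= N./2 - 1)%N ->
      scale N k * scale N (N./2 - k) = GenScale N :> R)
   /\ scales N = rev [seq GenScale N / x | x <- scales N] :> seq R
   /\ Qspan_dim_le (scales N : seq R) (N %/ 4))
  (* (ii) *)
  /\ ((N %% 4 = 2)%N ->
      Qspan_dim_le (scales N : seq R) (N %/ 4)
       /\ forall m : nat, (1 <= 2 * m <= N./2 - 1)%N ->
            odd (N./2 - 2 * m) /\
            scale N (2 * m) = GenScale N / scale N (N./2 - 2 * m) :> R)
  (* (iii) *)
  /\ ((4 %| N)%N ->
      scale N (N %/ 4) = Num.sqrt (GenScale N) :> R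
      /\ forall k : nat, (N %/ 4 < k <= N./2 - 1)%N ->
            scale N k = GenScale N / scale N (N./2 - k) :> R)
  (* (iv) *)
  /\ ((6 <= N)%N ->
      ScaleSwap N N./2 = scale N 2 :> R
      /\ forall k : nat, (1 <= k)%N -> (4 * k < N)%N ->
            scale N./2 k = scale N (2 * k) / ScaleSwap N N./2 :> R).
Proof.
have [n HN] : exists n, N = n.*2.
  by exists N./2; rewrite -[LHS]odd_double_half (negbTE Hev).
subst N; rewrite doubleK.
have n1 : (1 < n)%N by lia.
have d4 : (n.*2 %/ 4 = n./2)%N by lia.
rewrite d4.
have prod k : (1 <= k <= n - 1)%N ->
    scale (n.*2) k * scale (n.*2) (n - k) = GenScale (n.*2) :> R.
  by move=> hk; apply: scale_prod; lia.
have divE k : (1 <= k <= n - 1)%N ->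
    scale (n.*2) k = GenScale (n.*2) / scale (n.*2) (n - k) :> R.
  move=> hk; rewrite -(prod k hk) mulfK //; apply: lt0r_neq0; apply: scale_gt0; lia.
split; [split; [exact: prod|split; [|exact: span_scales']]|].
  rewrite /scales doubleK -map_comp.
  set f := (_ \o _).
  have -> : map f (iota 1 (n - 1)) = map (fun k => scale (n.*2) (n - k)%N) (iota 1 (n - 1)).
    apply/eq_in_map => k; rewrite mem_iota => hk; rewrite /f /=.
    have hk' : (1 <= n - k <= n - 1)%N by lia.
    by rewrite (divE _ hk') /= subKn //; lia.
  rewrite (map_comp (scale (n.*2)) (fun k => (n - k)%N)) -map_rev.
  have h := rev_iota_map (n - 1); have e : (n - 1).+1 = n by lia.
  by rewrite e in h; rewrite h.
split.
  move=> h4; split; first exact: span_scales'.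
  move=> m hm; split; first by move: h4 hm; rewrite -[n]odd_double_half; case: (odd n); lia.
  exact: divE.
split.
  move=> h4; have ne : n = (n./2).*2 by lia.
  split; last first.
    move=> k hk; apply: divE; lia.
  have hp := prod (n./2); have e2 : (n - n./2 = n./2)%N by lia.
  rewrite e2 in hp.
  rewrite -hp; last lia.
  rewrite (_ : forall x : R, x * x = x ^+ 2); last by move=> x; rewrite expr2.
  rewrite sqrtr_sqr ger0_norm // ltW //; apply: scale_gt0; lia.
move=> h6; have n3 : (2 < n)%N by lia.
have hn : n%:R != 0 :> R by rewrite pnatr_eq0; lia.
have pE : pi / n%:R = 2%:R * pi / (n.*2)%:R :> R.
  by rewrite -mul2n natrM; field; rewrite hn.
split.
  by rewrite /ScaleSwap /scale pE.
move=> k k1 k4.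
have hx : tan (pi / (n.*2)%:R) != 0 :> R.
  have := @sin_th_gt0 R n 1 isT n1; have := @cos_th_gt0 R n 1 isT n1.
  rewrite /th mul1r /tan => *; apply: lt0r_neq0; by rewrite divr_gt0.
rewrite /ScaleSwap /scale pE.
have -> : (2 * k)%:R * pi / (n.*2)%:R = k%:R * pi / n%:R :> R.
  by rewrite -mul2n !natrM; field; rewrite hn.
rewrite -pE.
have aux (a b c : R) : a != 0 -> c / b = a / b / (a / c).
  by move=> ha; rewrite invf_div [RHS]mulrC [RHS]mulrA divfK.
exact: aux.
Qed.
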